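(* Let $q$ be a prime power and let $\mathcal{H}_q$ be the Hermitian unital. If $s \geq 3$ lines of $\mathcal{H}_q$ pairwise intersect, then either all of them contain a common point of $\mathcal{H}_q$, or they form an $s$-fan.
   Context: The Hermitian unital $\mathcal{H}_q$ is the partial linear space whose point set is $P(\mathcal{H}_q)=\{\langle x,y,z\rangle \subset \mathbb{F}_{q^2}^3 : x^{q+1}+y^{q+1}+z^{q+1}=0\}$ (points of the projective plane $\mathrm{PG}(2,q^2)$, i.e. one-dimensional subspaces of $\mathbb{F}_{q^2}^3$), and whose lines are the intersections with $P(\mathcal{H}_q)$ of those lines of $\mathrm{PG}(2,q^2)$ meeting $P(\mathcal{H}_q)$ in exactly $q+1$ points (every line of $\mathrm{PG}(2,q^2)$ meets $P(\mathcal{H}_q)$ in $1$ or $q+1$ points). For $s \geq 3$, an $s$-fan is a set of $s$ pairwise intersecting lines such that $s-1$ of the lines all pass through a common point while the remaining line does not pass through that point. *)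

(* Defs.v *)
From HB Require Import structures.
From mathcomp Require Import all_boot all_order all_algebra all_field.
Set Implicit Arguments. Unset Strict Implicit. Unset Printing Implicit Defensive.
Import GRing.Theory.
Local Open Scope ring_scope.

(* Projective plane PG(2, F): points are the one-dimensional subspaces of F^3,
   represented canonically by the row space <<v>>%MS of a nonzero v : 'rV_3. *)
Section Hermitian.
Variables (F : finFieldType) (q : nat).

Definition herm (v : 'rV[F]_3) : F := \sum_(i < 3) v 0 i ^+ q.+1.

Definition unital_points : {set 'M[F]_3} :=
  [set <<v>>%MS | v : 'rV[F]_3 in [set v : 'rV[F]_3 | (v != 0) && (herm v == 0)]].

Definition pg_line (w : 'rV[F]_3) : {set 'M[F]_3} :=
  [set <<v>>%MS | v : 'rV[F]_3 in [set v : 'rV[F]_3 | (v != 0) && (v *m w^T == 0)]].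

Definition unital_lines : {set {set 'M[F]_3}} :=
  [set pg_line w :&: unital_points | w : 'rV[F]_3 in
     [set w : 'rV[F]_3 | (w != 0) && (#|pg_line w :&: unital_points| == q.+1)%N]].

End Hermitian.

Definition is_fan (T : finType) (S : {set {set T}}) : Prop :=
  exists P : T, exists L0, L0 \in S /\ P \notin L0 /\
    forall L, L \in S -> L != L0 -> P \in L.

(* Main.v *)
Require Import Defs.
From HB Require Import structures.
From mathcomp Require Import all_boot all_order all_algebra all_field.
From mathcomp Require Import ring.
Set Implicit Arguments. Unset Strict Implicit. Unset Printing Implicit Defensive.
Import GRing.Theory.
Local Open Scope ring_scope.

Lemma cj0 (F : fieldType) (cj : F -> F) (cjD : forall x y, cj (x + y) = cj x + cj y) : cj 0 = 0.
Proof. have h : cj 0 + cj 0 = cj 0 + 0 by rewrite addr0 -cjD addr0. exact: (addrI _ h). Qed.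

Lemma cjN (F : fieldType) (cj : F -> F) (cjD : forall x y, cj (x + y) = cj x + cj y) x : cj (- x) = - cj x.
Proof. by apply/eqP; rewrite -subr_eq0 opprK -cjD addNr (cj0 cjD). Qed.

Lemma cjB (F : fieldType) (cj : F -> F) (cjD : forall x y, cj (x + y) = cj x + cj y) x y : cj (x - y) = cj x - cj y.
Proof. by rewrite cjD (cjN cjD). Qed.

Lemma scalar_core (F : fieldType) (cj : F -> F)
  (cjD : forall x y, cj (x + y) = cj x + cj y)
  (cjM : forall x y, cj (x * y) = cj x * cj y)
  (cjK : forall x, cj (cj x) = x)
  (s1 t1 s2 t2 s3 t3 Gab Gba Gbc Gcb Gca Gac : F) :
  cj Gab = Gba -> cj Gbc = Gcb -> cj Gca = Gac ->
  s1 * cj t1 * Gac + t1 * cj s1 * Gca = 0 ->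
  s2 * cj t2 * Gab + t2 * cj s2 * Gba = 0 ->
  s3 * cj t3 * Gbc + t3 * cj s3 * Gcb = 0 ->
  s1 * t2 * t3 + t1 * s2 * s3 = 0 ->
  t1 != 0 -> s2 != 0 -> s3 != 0 ->
  Gab * Gbc * Gca + Gac * Gba * Gcb != 0 -> False.
Proof.
move=> eab ebc eca H1 H2 H3 Hd nt1 ns2 ns3 HG.
have cjN' := cjN cjD.
set Y1 := t1 * cj s1 * Gca.
set Y2 := s2 * cj t2 * Gab.
set Y3 := s3 * cj t3 * Gbc.
have e1 : cj Y1 = - Y1.
  rewrite /Y1 !cjM cjK eca; apply/eqP; rewrite -addr_eq0; apply/eqP; rewrite -H1; ring.
have e2 : cj Y2 = - Y2.
  rewrite /Y2 !cjM cjK eab; apply/eqP; rewrite -addr_eq0; apply/eqP; rewrite -H2; ring.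
have e3 : cj Y3 = - Y3.
  rewrite /Y3 !cjM cjK ebc; apply/eqP; rewrite -addr_eq0; apply/eqP; rewrite -H3; ring.
set m := t1 * s2 * s3.
have hm : s1 * t2 * t3 = - m by apply/eqP; rewrite -addr_eq0 Hd.
set K := m * cj m.
have hY : Y1 * Y2 * Y3 = - (K * (Gab * Gbc * Gca)).
  have -> : Y1 * Y2 * Y3 = m * cj (s1 * t2 * t3) * (Gab * Gbc * Gca).
    by rewrite /Y1 /Y2 /Y3 /m !cjM; ring.
  by rewrite hm cjN' /K; ring.
have hcY : cj (Y1 * Y2 * Y3) = - (Y1 * Y2 * Y3) by rewrite cjM cjM e1 e2 e3; ring.
have hK : cj K = K by rewrite /K cjM cjK mulrC.
move: hcY; rewrite hY cjN' cjM hK !cjM eab ebc eca opprK => /eqP.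
rewrite -subr_eq0 => /eqP.
have -> : - (K * (Gba * Gcb * Gac)) - K * (Gab * Gbc * Gca) = - (K * (Gab * Gbc * Gca + Gac * Gba * Gcb)) by ring.
move/eqP; rewrite oppr_eq0 mulf_eq0 (negbTE HG) orbF /K mulf_eq0 => /orP[] /eqP hm0.
  by move/eqP: hm0; rewrite /m !mulf_eq0 (negbTE nt1) (negbTE ns2) (negbTE ns3).
have : m = 0 by rewrite -[m]cjK hm0 (cj0 cjD).
by move/eqP; rewrite /m !mulf_eq0 (negbTE nt1) (negbTE ns2) (negbTE ns3).
Qed.
Definition i0 : 'I_3 := @Ordinal 3 0 erefl.
Definition i1 : 'I_3 := @Ordinal 3 1 erefl.
Definition i2 : 'I_3 := @Ordinal 3 2 erefl.

Lemma ord3E (i : 'I_3) : i = i0 \/ i = i1 \/ i = i2.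
Proof.
case: i => [[|[|[|m]]] Hm].
- by left; apply/val_inj.
- by right; left; apply/val_inj.
- by right; right; apply/val_inj.
- by [].
Qed.

Lemma sum3 (R : nmodType) (f : 'I_3 -> R) : \sum_(i < 3) f i = f i0 + f i1 + f i2.
Proof.
rewrite !big_ord_recl big_ord0 addr0 addrA.
by congr (f _ + f _ + f _); apply/val_inj.
Qed.

Section V.
Variable F : fieldType.
Implicit Types u v w x a b c : 'rV[F]_3.

Definition dot u w := u 0 i0 * w 0 i0 + u 0 i1 * w 0 i1 + u 0 i2 * w 0 i2.
Definition det3 a b c :=
  a 0 i0 * (b 0 i1 * c 0 i2 - b 0 i2 * c 0 i1)
  - a 0 i1 * (b 0 i0 * c 0 i2 - b 0 i2 * c 0 i0)
  + a 0 i2 * (b 0 i0 * c 0 i1 - b 0 i1 * c 0 i0).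
Definition cr0 u v := u 0 i1 * v 0 i2 - u 0 i2 * v 0 i1.
Definition cr1 u v := u 0 i2 * v 0 i0 - u 0 i0 * v 0 i2.
Definition cr2 u v := u 0 i0 * v 0 i1 - u 0 i1 * v 0 i0.
Definition crossv u v : 'rV[F]_3 :=
  \row_(i < 3) (if val i == 0%N then cr0 u v else if val i == 1%N then cr1 u v else cr2 u v).
Definition par u v := forall i j : 'I_3, u 0 i * v 0 j = u 0 j * v 0 i.

Lemma crossvE u v : [/\ crossv u v 0 i0 = cr0 u v, crossv u v 0 i1 = cr1 u v &
   crossv u v 0 i2 = cr2 u v].
Proof. by rewrite !mxE. Qed.

Lemma exists_nz v : v != 0 -> exists j, v 0 j != 0.
Proof.
move=> hv; apply/existsP; apply: contraR hv; rewrite negb_exists => /forallP H.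
by apply/eqP/rowP => j; rewrite mxE; apply/eqP; rewrite -[_ == _]negbK H.
Qed.

Lemma nz3 v : v != 0 -> [\/ v 0 i0 != 0, v 0 i1 != 0 | v 0 i2 != 0].
Proof.
move=> /exists_nz [j hj]; case: (ord3E j) => [->|[->|->]] in hj *;
  by [constructor 1 | constructor 2 | constructor 3].
Qed.

Lemma par_cross u v : cr0 u v = 0 -> cr1 u v = 0 -> cr2 u v = 0 -> par u v.
Proof.
rewrite /cr0 /cr1 /cr2 => /eqP; rewrite subr_eq0 => /eqP h0 /eqP; rewrite subr_eq0 => /eqP h1 /eqP.
rewrite subr_eq0 => /eqP h2 i j.
case: (ord3E i) => [->|[->|->]]; case: (ord3E j) => [->|[->|->]];
  first [done | exact: h0 | exact: (esym h0) | exact: h1 | exact: (esym h1)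
        | exact: h2 | exact: (esym h2)].
Qed.

Lemma par_prop u v : v != 0 -> par u v -> exists k, u = k *: v.
Proof.
move=> /exists_nz [j hj] hp; exists (u 0 j / v 0 j).
apply/rowP => i; rewrite mxE.
by rewrite mulrAC -hp mulfK.
Qed.

Lemma par_dot w y x j : par w y -> w 0 j * dot x y = y 0 j * dot x w.
Proof.
move=> hp; rewrite /dot.
have H i : w 0 j * y 0 i = y 0 j * w 0 i by rewrite hp mulrC.
have -> : w 0 j * (x 0 i0 * y 0 i0 + x 0 i1 * y 0 i1 + x 0 i2 * y 0 i2) =
  x 0 i0 * (w 0 j * y 0 i0) + x 0 i1 * (w 0 j * y 0 i1) + x 0 i2 * (w 0 j * y 0 i2) by ring.
rewrite !H; ring.
Qed.

Lemma dot_scale k u w : dot (k *: u) w = k * dot u w.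
Proof. rewrite /dot !mxE; ring. Qed.


Lemma cross_cross w u v :
  [/\ cr0 w (crossv u v) = u 0 i0 * dot w v - v 0 i0 * dot w u,
      cr1 w (crossv u v) = u 0 i1 * dot w v - v 0 i1 * dot w u &
      cr2 w (crossv u v) = u 0 i2 * dot w v - v 0 i2 * dot w u].
Proof.
have [e0 e1 e2] := crossvE u v.
by rewrite /cr0 /cr1 /cr2 e0 e1 e2 /cr0 /cr1 /cr2 /dot; split; ring.
Qed.

Lemma dotC u w : dot u w = dot w u.
Proof. rewrite /dot; ring. Qed.

Lemma ortho_equiv u v w x : w != 0 -> dot u w = 0 -> dot v w = 0 ->
  crossv u v != 0 -> (dot x w == 0) = (dot x (crossv u v) == 0).
Proof.
move=> hw hu hv hy.
have hp : par w (crossv u v).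
  have [e0 e1 e2] := cross_cross w u v.
  by apply: par_cross; rewrite ?e0 ?e1 ?e2 dotC hv dotC hu !mulr0 subr0.
apply/eqP/eqP => h.
  have [j hj] := exists_nz hw.
  have := par_dot x j hp; rewrite h mulr0 => /eqP; rewrite mulf_eq0 (negbTE hj) /=.
  by move/eqP.
have [j hj] := exists_nz hy.
have := par_dot x j hp; rewrite h mulr0 => /esym /eqP; rewrite mulf_eq0 (negbTE hj) /=.
by move/eqP.
Qed.

Lemma det0 d e f w : w != 0 -> dot d w = 0 -> dot e w = 0 -> dot f w = 0 ->
  det3 d e f = 0.
Proof.
move=> hw hd he hf.
have key : forall j, det3 d e f * w 0 j =
   dot d w * crossv e f 0 j + dot e w * crossv f d 0 j + dot f w * crossv d e 0 j.
  move=> j; have [e0 e1 e2] := crossvE e f; have [f0 f1 f2] := crossvE f d;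
  have [g0 g1 g2] := crossvE d e.
  case: (ord3E j) => [->|[->|->]]; rewrite ?e0 ?f0 ?g0 ?e1 ?f1 ?g1 ?e2 ?f2 ?g2 /det3 /dot /cr0 /cr1 /cr2; ring.
have [j hj] := exists_nz hw.
have := key j; rewrite hd he hf !mul0r !addr0 => /eqP; rewrite mulf_eq0 (negbTE hj) orbF.
by move/eqP.
Qed.

Lemma cramer a b c d :
  det3 a b c *: d = det3 d b c *: a + det3 a d c *: b + det3 a b d *: c.
Proof.
apply/rowP => i; rewrite !mxE.
case: (ord3E i) => [->|[->|->]]; rewrite /det3; ring.
Qed.

Lemma det3_cross a b c : det3 a b c = dot c (crossv a b).
Proof.
have [e0 e1 e2] := crossvE a b.
by rewrite /dot e0 e1 e2 /det3 /cr0 /cr1 /cr2; ring.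
Qed.

End V.

Section H.
Variables (F : fieldType) (cj : F -> F).
Hypothesis cjD : forall x y, cj (x + y) = cj x + cj y.
Hypothesis cjM : forall x y, cj (x * y) = cj x * cj y.
Hypothesis cjK : forall x, cj (cj x) = x.
Implicit Types u v w x a b c d e f : 'rV[F]_3.

Definition hh a b := a 0 i0 * cj (b 0 i0) + a 0 i1 * cj (b 0 i1) + a 0 i2 * cj (b 0 i2).

Lemma hh_lin s t a c : hh (s *: a + t *: c) (s *: a + t *: c) =
  s * cj s * hh a a + s * cj t * hh a c + t * cj s * hh c a + t * cj t * hh c c.
Proof. rewrite /hh !mxE !cjD !cjM; ring. Qed.

Lemma hh_scale k v : hh (k *: v) (k *: v) = k * cj k * hh v v.
Proof. rewrite /hh !mxE !cjM; ring. Qed.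

Lemma hh_conj a b : cj (hh a b) = hh b a.
Proof. rewrite /hh !cjD !cjM !cjK; ring. Qed.

Lemma gram a b c : det3 a b c * cj (det3 a b c) =
  hh a a * (hh b b * hh c c - hh b c * hh c b)
  - hh a b * (hh b a * hh c c - hh b c * hh c a)
  + hh a c * (hh b a * hh c b - hh b b * hh c a).
Proof.
have cjB' := cjB cjD.
rewrite /det3 /hh !(cjD, cjN cjD, cjM); ring.
Qed.

Lemma det_comb s1 t1 s2 t2 s3 t3 a b c :
  det3 (s1 *: a + t1 *: c) (s2 *: a + t2 *: b) (s3 *: b + t3 *: c) =
  det3 a b c * (s1 * t2 * t3 + t1 * s2 * s3).
Proof. rewrite /det3 !mxE; ring. Qed.

Lemma det_scale k d e f : det3 (k *: d) (k *: e) (k *: f) = k ^+ 3 * det3 d e f.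
Proof. rewrite /det3 !mxE; ring. Qed.


Lemma prop_of_scaled (D k : F) d a : D != 0 -> D *: d = k *: a -> d = (D^-1 * k) *: a.
Proof. by move=> hD h; rewrite -scalerA -h scalerA mulVf // scale1r. Qed.

Lemma vec_core a b c d e f w1 w2 w3 w4 :
  w1 != 0 -> w2 != 0 -> w3 != 0 -> w4 != 0 ->
  hh a a = 0 -> hh b b = 0 -> hh c c = 0 -> hh d d = 0 -> hh e e = 0 -> hh f f = 0 ->
  dot a w1 = 0 -> dot c w1 = 0 -> dot d w1 = 0 ->
  dot a w2 = 0 -> dot b w2 = 0 -> dot e w2 = 0 ->
  dot b w3 = 0 -> dot c w3 = 0 -> dot f w3 = 0 ->
  dot d w4 = 0 -> dot e w4 = 0 -> dot f w4 = 0 ->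
  det3 a b c != 0 ->
  ~ (exists k, d = k *: a) -> ~ (exists k, d = k *: c) ->
  ~ (exists k, e = k *: a) -> ~ (exists k, e = k *: b) ->
  ~ (exists k, f = k *: b) -> ~ (exists k, f = k *: c) -> False.
Proof.
move=> hw1 hw2 hw3 hw4 ha hb hc hd he hf a1 c1 d1 a2 b2 e2 b3 c3 f3 d4 e4 f4 hD
  nda ndc nea neb nfb nfc.
set D := det3 a b c in hD.
have cjD0 := cj0 cjD.
have hcD : cj D != 0.
  by apply: contra hD => /eqP h; rewrite -[D]cjK h cjD0.
have Ed : D *: d = det3 d b c *: a + det3 a b d *: c.
  by rewrite [LHS](cramer a b c) (det0 hw1 a1 d1 c1) scale0r addr0.
set s1 := det3 d b c in Ed; set t1 := det3 a b d in Ed.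
have nt1 : t1 != 0.
  apply/negP => /eqP h0; apply: nda; exists (D^-1 * s1).
  by apply: prop_of_scaled hD _; rewrite Ed h0 scale0r addr0.
have ns1 : s1 != 0.
  apply/negP => /eqP h0; apply: ndc; exists (D^-1 * t1).
  by apply: prop_of_scaled hD _; rewrite Ed h0 scale0r add0r.
have Ee : D *: e = det3 e b c *: a + det3 a e c *: b.
  by rewrite [LHS](cramer a b c) (det0 hw2 a2 b2 e2) scale0r addr0.
set s2 := det3 e b c in Ee; set t2 := det3 a e c in Ee.
have nt2 : t2 != 0.
  apply/negP => /eqP h0; apply: nea; exists (D^-1 * s2).
  by apply: prop_of_scaled hD _; rewrite Ee h0 scale0r addr0.
have ns2 : s2 != 0.
  apply/negP => /eqP h0; apply: neb; exists (D^-1 * t2).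
  by apply: prop_of_scaled hD _; rewrite Ee h0 scale0r add0r.
have Ef : D *: f = det3 a f c *: b + det3 a b f *: c.
  by rewrite [LHS](cramer a b c) (det0 hw3 f3 b3 c3) scale0r add0r.
set s3 := det3 a f c in Ef; set t3 := det3 a b f in Ef.
have nt3 : t3 != 0.
  apply/negP => /eqP h0; apply: nfb; exists (D^-1 * s3).
  by apply: prop_of_scaled hD _; rewrite Ef h0 scale0r addr0.
have ns3 : s3 != 0.
  apply/negP => /eqP h0; apply: nfc; exists (D^-1 * t3).
  by apply: prop_of_scaled hD _; rewrite Ef h0 scale0r add0r.
have H1 : s1 * cj t1 * hh a c + t1 * cj s1 * hh c a = 0.
  have := hh_scale D d; rewrite hd mulr0 Ed hh_lin ha hc !mulr0 addr0.
  by rewrite -addrA add0r.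
have H2 : s2 * cj t2 * hh a b + t2 * cj s2 * hh b a = 0.
  have := hh_scale D e; rewrite he mulr0 Ee hh_lin ha hb !mulr0 addr0.
  by rewrite -addrA add0r.
have H3 : s3 * cj t3 * hh b c + t3 * cj s3 * hh c b = 0.
  have := hh_scale D f; rewrite hf mulr0 Ef hh_lin hb hc !mulr0 addr0.
  by rewrite -addrA add0r.
have Hdet : s1 * t2 * t3 + t1 * s2 * s3 = 0.
  have := det_scale D d e f; rewrite (det0 hw4 d4 e4 f4) mulr0 Ed Ee Ef.
  rewrite det_comb -/D => /eqP; rewrite mulf_eq0 (negbTE hD) /= => /eqP //.
have HG : hh a b * hh b c * hh c a + hh a c * hh b a * hh c b != 0.
  have <- : D * cj D = hh a b * hh b c * hh c a + hh a c * hh b a * hh c b.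
    by rewrite /D gram ha hb hc; ring.
  by rewrite mulf_neq0.
by apply: (scalar_core cjD cjM cjK (hh_conj a b) (hh_conj b c) (hh_conj c a) H1 H2 H3 Hdet nt1 ns2 ns3 HG).
Qed.

End H.

Section S.
Variables (F : finFieldType) (q : nat).
Implicit Types u v w x a b c : 'rV[F]_3.
Local Notation U := (@unital_points F q).

Lemma herm_hh v : herm q v = hh (fun z : F => z ^+ q) v v.
Proof. by rewrite /herm sum3 /hh !exprS. Qed.

Lemma herm_scale k v : herm q (k *: v) = k ^+ q.+1 * herm q v.
Proof. by rewrite /herm !sum3 !mxE !exprMn; ring. Qed.

Lemma mulT u w : (u *m w^T == 0) = (dot u w == 0).
Proof.
have -> : dot u w = (u *m w^T) 0 0 by rewrite !mxE sum3 /dot !mxE.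
apply/eqP/eqP => [->|h]; first by rewrite mxE.
by apply/matrixP => i j; rewrite !ord1 h mxE.
Qed.

Lemma pt_eq u v : <<u>>%MS = <<v>>%MS -> exists k, u = k *: v.
Proof. by move/genmxP => /andP [h _]; apply/sub_rVP. Qed.

Lemma pt_eq2 u v k : u = k *: v -> u != 0 -> <<u>>%MS = <<v>>%MS.
Proof.
move=> -> hu; apply: eq_genmx; apply: eqmx_scale.
by apply: contra hu => /eqP ->; rewrite scale0r.
Qed.

Lemma memU v : v != 0 -> (<<v>>%MS \in U) = (herm q v == 0).
Proof.
move=> hv; apply/imsetP/idP => [[v' ] | h].
  rewrite inE => /andP [hv' /eqP h0] /pt_eq [k ->].
  by rewrite herm_scale h0 mulr0.
by exists v => //; rewrite inE hv.
Qed.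

Lemma memPG v w : v != 0 -> (<<v>>%MS \in pg_line w) = (dot v w == 0).
Proof.
move=> hv; apply/imsetP/idP => [[v' ] | h].
  rewrite inE mulT => /andP [hv' /eqP h0] /pt_eq [k ->].
  by rewrite dot_scale h0 mulr0.
by exists v => //; rewrite inE hv mulT.
Qed.

Lemma ptU P : P \in U -> exists v, [/\ v != 0, herm q v = 0 & P = <<v>>%MS].
Proof. by case/imsetP => v; rewrite inE => /andP [hv /eqP h] ->; exists v. Qed.

Lemma lineE L : L \in @unital_lines F q ->
  exists w, w != 0 /\ L = pg_line w :&: U.
Proof. by case/imsetP => w; rewrite inE => /andP [hw _] ->; exists w. Qed.

Lemma lineU L P : L \in @unital_lines F q -> P \in L -> P \in U.
Proof. by case/lineE => w [_ ->] /setIP []. Qed.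

Lemma memL v w : v != 0 -> (<<v>>%MS \in pg_line w :&: U) = (dot v w == 0) && (herm q v == 0).
Proof. by move=> hv; rewrite inE memPG // memU. Qed.

Lemma crossnz u v : u != 0 -> v != 0 -> <<u>>%MS != <<v>>%MS -> crossv u v != 0.
Proof.
move=> hu hv; apply: contraNN => /eqP h.
have [e0 e1 e2] := crossvE u v.
have hp : par u v by apply: par_cross; rewrite -?e0 -?e1 -?e2 h mxE.
have [k hk] := par_prop hv hp.
by rewrite (pt_eq2 hk hu).
Qed.

Lemma LU L M P Q : L \in @unital_lines F q -> M \in @unital_lines F q ->
  P \in L -> Q \in L -> P \in M -> Q \in M -> P != Q -> L = M.
Proof.
move=> hL hM PL QL PM QM hPQ.
have [p [hp _ eP]] := ptU (lineU hL PL).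
have [r [hr _ eQ]] := ptU (lineU hL QL).
have [wL [hwL eL]] := lineE hL; have [wM [hwM eM]] := lineE hM.
subst P Q; rewrite eL in PL QL; rewrite eM in PM QM.
rewrite memL // in PL; rewrite memL // in QL; rewrite memL // in PM; rewrite memL // in QM.
case/andP: PL => /eqP pL _; case/andP: QL => /eqP rL _.
case/andP: PM => /eqP pM _; case/andP: QM => /eqP rM _.
have hc := crossnz hp hr hPQ.
rewrite eL eM; apply/setP => X; rewrite !inE.
case XU: (X \in U); rewrite ?andbF ?andbT //.
have [x [hx _ ->]] := ptU XU.
by rewrite !memPG // (ortho_equiv _ hwL pL rL hc) (ortho_equiv _ hwM pM rM hc).
Qed.


Lemma inL L w v : L = pg_line w :&: U -> v != 0 -> <<v>>%MS \in L -> dot v w = 0.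
Proof. by move=> -> hv; rewrite memL // => /andP [/eqP ? _]. Qed.

Lemma nprop (L : {set 'M[F]_3}) x p : x != 0 -> <<x>>%MS \in L -> <<p>>%MS \notin L -> ~ (exists k, x = k *: p).
Proof. by move=> hx hX hP [k hk]; move: hP; rewrite -(pt_eq2 hk hx) hX. Qed.

Lemma tri (qD : forall x y : F, (x + y) ^+ q = x ^+ q + y ^+ q)
  (qK : forall x : F, (x ^+ q) ^+ q = x)
  L1 L2 L3 L4 A B C D E G :
  L1 \in @unital_lines F q -> L2 \in @unital_lines F q ->
  L3 \in @unital_lines F q -> L4 \in @unital_lines F q ->
  A \in L1 -> A \in L2 -> B \in L2 -> B \in L3 -> C \in L3 -> C \in L1 ->
  A \notin L3 -> C \notin L2 ->
  D \in L1 -> D \in L4 -> E \in L2 -> E \in L4 -> G \in L3 -> G \in L4 ->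
  A \notin L4 -> B \notin L4 -> C \notin L4 -> False.
Proof.
move=> h1 h2 h3 h4 A1 A2 B2 B3 C3 C1 nA3 nC2 D1 D4 E2 E4 G3 G4 nA4 nB4 nC4.
have [a [ha Ha eA]] := ptU (lineU h1 A1).
have [b [hb Hb eB]] := ptU (lineU h2 B2).
have [c [hc Hc eC]] := ptU (lineU h3 C3).
have [d [hd Hd eD]] := ptU (lineU h1 D1).
have [e [he He eE]] := ptU (lineU h2 E2).
have [g [hg Hg eG]] := ptU (lineU h3 G3).
subst A B C D E G.
have [w1 [hw1 e1]] := lineE h1; have [w2 [hw2 e2]] := lineE h2.
have [w3 [hw3 e3]] := lineE h3; have [w4 [hw4 e4]] := lineE h4.
have hAB : <<a>>%MS != <<b>>%MS by apply: contraNneq nA3 => ->.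
have hD : det3 a b c != 0.
  apply/negP => /eqP h0.
  have hab := crossnz ha hb hAB.
  have := ortho_equiv c hw2 (inL e2 ha A2) (inL e2 hb B2) hab.
  rewrite -det3_cross h0 eqxx => /eqP hc2.
  by move: nC2; rewrite e2 memL // hc2 Hc eqxx.
rewrite !herm_hh in Ha Hb Hc Hd He Hg.
apply: (vec_core (cj := fun z : F => z ^+ q) _ _ _ hw1 hw2 hw3 hw4 Ha Hb Hc Hd He Hg
  (inL e1 ha A1) (inL e1 hc C1) (inL e1 hd D1)
  (inL e2 ha A2) (inL e2 hb B2) (inL e2 he E2)
  (inL e3 hb B3) (inL e3 hc C3) (inL e3 hg G3)
  (inL e4 hd D4) (inL e4 he E4) (inL e4 hg G4) hD
  (nprop hd D4 nA4) (nprop hd D4 nC4) (nprop he E4 nA4) (nprop he E4 nB4)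
  (nprop hg G4 nB4) (nprop hg G4 nC4)).
- exact: qD.
- by move=> x y; rewrite exprMn.
- exact: qK.
Qed.


Lemma neq_of (L : {set 'M[F]_3}) P Q : P \in L -> Q \notin L -> Q != P.
Proof. by move=> hP; apply: contraNneq => ->. Qed.

Lemma TV (qD : forall x y : F, (x + y) ^+ q = x ^+ q + y ^+ q)
  (qK : forall x : F, (x ^+ q) ^+ q = x)
  L1 L2 L3 L L' A B C D E G :
  L1 \in @unital_lines F q -> L2 \in @unital_lines F q ->
  L3 \in @unital_lines F q -> L \in @unital_lines F q -> L' \in @unital_lines F q ->
  A \in L1 -> A \in L2 -> B \in L2 -> B \in L3 -> C \in L3 -> C \in L1 ->
  A \notin L3 -> B \notin L1 -> C \notin L2 ->
  A \in L -> B \in L' -> L != L1 -> L != L2 -> L' != L2 -> L' != L3 ->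
  D \in L -> D \in L3 -> E \in L' -> E \in L1 -> G \in L -> G \in L' -> False.
Proof.
move=> h1 h2 h3 h h' A1 A2 B2 B3 C3 C1 nA3 nB1 nC2 AL BL' nL1 nL2 nL'2 nL'3
  DL D3 EL' E1 GL GL'.
have nAB : A != B := neq_of B3 nA3.
have nAC : A != C := neq_of C3 nA3.
have nBC : B != C := neq_of C1 nB1.
have nCL : C \notin L.
  by apply/negP => CL; move/eqP: nL1; apply; apply: (LU h h1 AL CL A1 C1 nAC).
have nD1 : D \notin L1.
  apply/negP => D1.
  have eDC : D = C.
    apply/eqP; apply/negPn/negP => nDC.
    by move: nA3; rewrite -(LU h1 h3 D1 C1 D3 C3 nDC) A1.
  by move: nCL; rewrite -eDC DL.
have nAL' : A \notin L'.
  by apply/negP => AL'; move/eqP: nL'2; apply; apply: (LU h' h2 AL' BL' A2 B2 nAB).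
have nCL' : C \notin L'.
  by apply/negP => CL'; move/eqP: nL'3; apply; apply: (LU h' h3 BL' CL' B3 C3 nBC).
have nDL' : D \notin L'.
  apply/negP => DL'.
  have nDB : D != B.
    apply/negP => /eqP eDB; move/eqP: nL2; apply.
    by apply: (LU h h2 AL (_ : B \in L) A2 B2 nAB); rewrite -eDB.
  by move/eqP: nL'3; apply; apply: (LU h' h3 DL' BL' D3 B3 nDB).
exact: (tri qD qK h h1 h3 h' AL A1 C1 C3 D3 DL nA3 nD1 GL GL' E1 EL' B3 BL' nAL' nCL' nDL').
Qed.

End S.

Theorem lemma3p1 (F : finFieldType) (q : nat)
  (hq : exists p k, prime p /\ q = (p ^ k.+1)%N)
  (hF : #|F| = (q ^ 2)%N)
  (S : {set {set 'M[F]_3}})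
  (hS : S \subset @unital_lines F q)
  (hs : (3 <= #|S|)%N)
  (hpair : forall L1 L2, L1 \in S -> L2 \in S -> L1 :&: L2 != set0) :
  (exists P, P \in @unital_points F q /\ forall L, L \in S -> P \in L)
  \/ is_fan S.
Proof.
have [p [k [pp eq]]] := hq.
have chp : p \in [pchar F].
  apply: (card_finPcharP (n := (k.+1 * 2)%N)) pp.
  by rewrite hF eq expnM.
have qD : forall x y : F, (x + y) ^+ q = x ^+ q + y ^+ q.
  move=> x y; apply: exprDn_pchar.
  by rewrite (eq_pnat _ (pcharf_eq chp)) eq pnatX pnat_id.
have qK : forall x : F, (x ^+ q) ^+ q = x.
  by move=> x; rewrite -exprM mulnn -hF expf_card.
move/subsetP: hS => hS.
have meet L M : L \in S -> M \in S -> exists P, P \in L /\ P \in M.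
  by move=> LS MS; case/set0Pn: (hpair L M LS MS) => P /setIP [] *; exists P.
have [L1 [L2 [L1S L2S n12]]] : exists L1 L2, [/\ L1 \in S, L2 \in S & L1 != L2].
  by apply/card_gt1P; apply: leq_trans hs.
have [A [A1 A2]] := meet L1 L2 L1S L2S.
have hL L : L \in S -> L \in @unital_lines F q := hS L.
case: (boolP [forall L in S, A \in L]) => [/forall_inP hall | ].
  by left; exists A; split => //; apply: (lineU (hL _ L1S) A1).
rewrite negb_forall_in => /exists_inP [L3 L3S nA3].
have [B [B2 B3]] := meet L2 L3 L2S L3S.
have [C [C3 C1]] := meet L3 L1 L3S L1S.
have nAB : A != B := neq_of B3 nA3.
have nAC : A != C := neq_of C3 nA3.
have nB1 : B \notin L1.
  by apply/negP => B1; move/eqP: n12; apply; apply: (LU (hL _ L1S) (hL _ L2S) A1 B1 A2 B2 nAB).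
have nC2 : C \notin L2.
  by apply/negP => C2; move/eqP: n12; apply; apply: (LU (hL _ L1S) (hL _ L2S) A1 C1 A2 C2 nAC).
have hv L : L \in S -> [|| A \in L, B \in L | C \in L].
  move=> LS; apply/negPn/negP; rewrite !negb_or => /and3P [nA nB nC].
  have [D [D1 DL]] := meet L1 L L1S LS.
  have [E [E2 EL]] := meet L2 L L2S LS.
  have [G [G3 GL]] := meet L3 L L3S LS.
  exact: (tri qD qK (hL _ L1S) (hL _ L2S) (hL _ L3S) (hL _ LS) A1 A2 B2 B3 C3 C1 nA3 nC2
     D1 DL E2 EL G3 GL nA nB nC).
right.
case: (boolP [forall L in S, (L != L3) ==> (A \in L)]) => [/forall_inP hall | ].
  exists A, L3; split => //; split => // L LS nL3.
  by move/implyP: (hall L LS); apply.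
rewrite negb_forall_in => /exists_inP [L' L'S]; rewrite negb_imply => /andP [nL'3 nAL'].
have nL'1 : L' != L1 by apply: contraNneq nAL' => ->.
have nL'2 : L' != L2 by apply: contraNneq nAL' => ->.
have TV' := TV qD qK.
case/or3P: (hv L' L'S) => [AL' | BL' | CL']; first by rewrite AL' in nAL'.
- exists B, L1; split => //; split => // L LS nL1.
  case/or3P: (hv L LS) => [AL | // | CL].
  + case: (eqVneq L L2) => [-> // | nL2].
    have [D [DL D3]] := meet L L3 LS L3S.
    have [E [EL' E1]] := meet L' L1 L'S L1S.
    have [G [GL GL']] := meet L L' LS L'S.
    by case: (TV' _ _ _ _ _ _ _ _ _ _ _ (hL _ L1S) (hL _ L2S) (hL _ L3S) (hL _ LS) (hL _ L'S)
      A1 A2 B2 B3 C3 C1 nA3 nB1 nC2 AL BL' nL1 nL2 nL'2 nL'3 DL D3 EL' E1 GL GL').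
  + case: (eqVneq L L3) => [-> // | nL3].
    have [D [DL' D1]] := meet L' L1 L'S L1S.
    have [E [EL E2]] := meet L L2 LS L2S.
    have [G [GL' GL]] := meet L' L L'S LS.
    by case: (TV' _ _ _ _ _ _ _ _ _ _ _ (hL _ L2S) (hL _ L3S) (hL _ L1S) (hL _ L'S) (hL _ LS)
      B2 B3 C3 C1 A1 A2 nB1 nC2 nA3 BL' CL nL'2 nL'3 nL3 nL1 DL' D1 EL E2 GL' GL).
- exists C, L2; split => //; split => // L LS nL2.
  case/or3P: (hv L LS) => [AL | BL | //].
  + case: (eqVneq L L1) => [-> // | nL1].
    have [D [DL' D2]] := meet L' L2 L'S L2S.
    have [E [EL E3]] := meet L L3 LS L3S.
    have [G [GL' GL]] := meet L' L L'S LS.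
    by case: (TV' _ _ _ _ _ _ _ _ _ _ _ (hL _ L3S) (hL _ L1S) (hL _ L2S) (hL _ L'S) (hL _ LS)
      C3 C1 A1 A2 B2 B3 nC2 nA3 nB1 CL' AL nL'3 nL'1 nL1 nL2 DL' D2 EL E3 GL' GL).
  + case: (eqVneq L L3) => [-> // | nL3].
    have [D [DL D1]] := meet L L1 LS L1S.
    have [E [EL' E2]] := meet L' L2 L'S L2S.
    have [G [GL GL']] := meet L L' LS L'S.
    by case: (TV' _ _ _ _ _ _ _ _ _ _ _ (hL _ L2S) (hL _ L3S) (hL _ L1S) (hL _ LS) (hL _ L'S)
      B2 B3 C3 C1 A1 A2 nB1 nC2 nA3 BL CL' nL2 nL3 nL'3 nL'1 DL D1 EL' E2 GL GL').
Qed.
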